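(* Let $G=(V,A)$ be a finite directed graph with root $r\in V$ such that every vertex has a directed path to $r$ in $G$. Run the following cluster-popping algorithm. Include each arc of $A$ independently with probability $1/2$, giving a subgraph $(V,S)$. While $(V,S)$ has a cluster, choose (by any rule) a minimal cluster $C$ of $(V,S)$ and re-randomise, independently with probability $1/2$ each, the membership in $S$ of every arc $e\in A$ whose tail lies in $C$. Then the algorithm terminates with probability $1$. On termination, $(V,S)$ is a uniformly random root-connected spanning subgraph of $G$.
   Context: For an arc $e$, $e^-$ denotes its tail and $e^+$ its head. A spanning subgraph $(V,S)$, $S\subseteq A$, is root-connected if every $v\in V$ has a directed path to $r$ in $(V,S)$. A cluster of $(V,S)$ is a nonempty set $C\subseteq V\setminus\{r\}$ such that no arc $e\in S$ has $e^-\in C$ and $e^+\in V\setminus C$. A cluster is minimal if it contains no other cluster as a proper subset. $(V,S)$ is root-connected iff it has no cluster. *)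

(* Defs.v *)
From HB Require Import structures.
From mathcomp Require Import all_boot all_order all_algebra.
From mathcomp Require Import all_classical all_reals all_analysis.
Set Implicit Arguments. Unset Strict Implicit. Unset Printing Implicit Defensive.
Import Order.TTheory GRing.Theory Num.Theory.
Local Open Scope ring_scope.

(* A finite directed (multi)graph: vertex type V, arc type E, with
   tail e = e^- and head e = e^+. *)
Section ClusterPopping.
Variables (V E : finType) (tail head : E -> V) (r : V).

Definition arc_rel (S : {set E}) : rel V :=
  fun u v => [exists e in S, (tail e == u) && (head e == v)].

Definition root_connected (S : {set E}) : bool :=
  [forall v, connect (arc_rel S) v r].

Definition is_cluster (S : {set E}) (C : {set V}) : bool :=
  [&& C != finset.set0, r \notin C &
      [forall e in S, (tail e \in C) ==> (head e \in C)]].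

Definition has_cluster (S : {set E}) : bool := [exists C, is_cluster S C].

Definition minimal_cluster (S : {set E}) (C : {set V}) : bool :=
  is_cluster S C && [forall C' : {set V}, (C' \proper C) ==> ~~ is_cluster S C'].

Definition out_arcs (C : {set V}) : {set E} := [set e | tail e \in C].

(* A choice rule sees the whole history of states (nonempty list, last
   element = current state) and picks a set of vertices. *)
Definition valid_rule (rule : seq {set E} -> {set V}) : Prop :=
  forall hist : seq {set E}, hist != [::] ->
    has_cluster (last finset.set0 hist) -> minimal_cluster (last finset.set0 hist) (rule hist).

Variable R : realType.
Variable rule : seq {set E} -> {set V}.

(* one-step transition probability from history [hist] (current state
   S := last hist) to the new state S'.  If S has no cluster the algorithm
   has stopped: the state is frozen. *)
Definition trans (hist : seq {set E}) (S' : {set E}) : R :=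
  let S := last finset.set0 hist in
  if has_cluster S then
    let C := rule hist in
    if [forall e, (tail e \notin C) ==> ((e \in S') == (e \in S))]
    then (2^-1) ^+ #|out_arcs C| else 0
  else (S' == S)%:R.

(* probability of the history t = (S_0, ..., S_n) *)
Definition hist_weight n (t : n.+1.-tuple {set E}) : R :=
  (2^-1) ^+ #|E| * \prod_(i < n) trans (take i.+1 t) (nth finset.set0 t i.+1).

Definition state_prob (n : nat) (S : {set E}) : R :=
  \sum_(t : n.+1.-tuple {set E} | last finset.set0 t == S) hist_weight t.

End ClusterPopping.

(* Main.v *)
Require Import Defs.
From HB Require Import structures.
From mathcomp Require Import all_boot all_order all_algebra.
From mathcomp Require Import all_classical all_reals all_analysis.
From mathcomp Require Import lra.
Import Order.TTheory GRing.Theory Num.Theory.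
Import numFieldNormedType.Exports.
Set Implicit Arguments. Unset Strict Implicit. Unset Printing Implicit Defensive.
Local Open Scope ring_scope.

Section Proof.
Variables (V E : finType) (tail head : E -> V) (r : V) (R : realType).
Implicit Types (C D : {set V}) (S T U : {set E}) (n k : nat) (phi psi f g : {set E} -> R).

Local Notation has_cl := (has_cluster tail head r).
Local Notation is_cl := (is_cluster tail head r).
Local Notation min_cl := (minimal_cluster tail head r).

Definition agr (C : {set V}) (S S' : {set E}) : bool :=
  [forall e, (tail e \notin C) ==> ((e \in S') == (e \in S))].

Lemma cluster_local (D : {set V}) (S S' : {set E}) :
  (forall e, tail e \in D -> (e \in S) = (e \in S')) ->
  is_cl S D = is_cl S' D.
Proof.
move=> H; rewrite /is_cluster; congr [&& _, _ & _].
apply: eq_forallb => e; case: (boolP (tail e \in D)) => He.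
  by rewrite H.
by case: (e \in S); case: (e \in S').
Qed.

Lemma min_local (D : {set V}) (S S' : {set E}) :
  (forall e, tail e \in D -> (e \in S) = (e \in S')) ->
  min_cl S D = min_cl S' D.
Proof.
move=> H; rewrite /minimal_cluster (cluster_local H); congr (_ && _).
apply: eq_forallb => C'; case: (boolP (C' \proper D)) => //= HC'.
rewrite (@cluster_local C' S S') // => e He; apply: H.
by move/proper_sub/fintype.subsetP: HC'; apply.
Qed.

Lemma min_cl_cl S C : min_cl S C -> is_cl S C.
Proof. by case/andP. Qed.

Lemma min_has S C : min_cl S C -> has_cl S.
Proof. by move/min_cl_cl=> H; apply/existsP; exists C. Qed.

Lemma min_disj S C D : min_cl S C -> min_cl S D -> C != D ->
  forall v, v \in C -> v \notin D.
Proof.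
move=> HC HD neq v vC; apply/negP => vD.
have HI : is_cl S (C :&: D).
  move: (min_cl_cl HC) (min_cl_cl HD) => /and3P[_ rC cC] /and3P[_ rD cD].
  apply/and3P; split.
  - by apply/set0Pn; exists v; rewrite inE vC.
  - by rewrite inE (negbTE rC).
  - apply/forall_inP => e eS; apply/implyP; rewrite !inE => /andP[t1 t2].
    by rewrite (implyP (forall_inP cC e eS) t1) (implyP (forall_inP cD e eS) t2).
have sub1 : C :&: D \subset C by apply: subsetIl.
have sub2 : C :&: D \subset D by apply: subsetIr.
have eC : C :&: D = C.
  apply/eqP; apply: contraT => ne.
  have : C :&: D \proper C by rewrite finset.properEneq ne sub1.
  by move=> pr; move: HC => /andP[_ /forallP /(_ (C :&: D))]; rewrite pr HI.
have eD : C :&: D = D.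
  apply/eqP; apply: contraT => ne.
  have : C :&: D \proper D by rewrite finset.properEneq ne sub2.
  by move=> pr; move: HD => /andP[_ /forallP /(_ (C :&: D))]; rewrite pr HI.
by move: neq; rewrite -eC -{2}eD eqxx.
Qed.

Lemma exists_min S : has_cl S -> exists C, min_cl S C.
Proof.
case/existsP=> C0 HC0.
case: (arg_minnP (fun C : {set V} => #|C|) HC0) => C HC Hmin.
exists C; apply/andP; split => //; apply/forallP => C'; apply/implyP => pr.
apply/negP => HC'; have := Hmin C' HC'.
by rewrite leqNgt (proper_card pr).
Qed.

Definition cc (S : {set E}) : {set V} := odflt finset.set0 [pick C | min_cl S C].

Lemma cc_min S : has_cl S -> min_cl S (cc S).
Proof.
move=> /exists_min[C HC]; rewrite /cc; case: pickP => //= /(_ C).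
by rewrite HC.
Qed.

Lemma root_connectedE S : root_connected tail head r S = ~~ has_cl S.
Proof.
apply/idP/idP.
- move/forallP=> H; apply/negP => /existsP[C /and3P[Cn rC cC]].
  case/set0Pn: Cn => v vC; move: (H v) => /connectP[p pp lp].
  elim: p v vC pp lp => [|w p IH] v vC /=; first by move=> _ lp; rewrite lp vC in rC.
  case/andP=> /existsP[e /and3P[eS /eqP te /eqP he]] pp lp.
  apply: (IH w) => //; rewrite -he.
  by apply: (implyP (forall_inP cC e eS)); rewrite te.
- move=> Hn; apply/forallP => v; apply: contraR Hn => Hv.
  apply/existsP; exists [set u | connect (arc_rel tail head S) v u].
  apply/and3P; split.
  + by apply/set0Pn; exists v; rewrite inE connect0.
  + by rewrite inE.
  + apply/forall_inP => e eS; apply/implyP; rewrite !inE => Ht.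
    apply: connect_trans Ht _; apply: connect1; apply/existsP; exists e.
    by rewrite eS !eqxx.
Qed.

Lemma has_cl_anti (S T : {set E}) : S \subset T -> has_cl T -> has_cl S.
Proof.
move=> sub /existsP[C /and3P[Cn rC cC]]; apply/existsP; exists C.
apply/and3P; split => //; apply/forall_inP => e eS.
by apply: (forall_inP cC); apply: (fintype.subsetP sub).
Qed.


Local Notation O C := (out_arcs tail C).

Definition Av (C : {set V}) (phi : {set E} -> R) (S : {set E}) : R :=
  (2^-1) ^+ #|O C| * \sum_(S' | agr C S S') phi S'.

Lemma agrP C S S' : reflect (forall e, tail e \notin C -> (e \in S') = (e \in S)) (agr C S S').
Proof.
apply: (iffP forallP) => H e.
  by move=> He; move: (H e); rewrite He /= => /eqP.
by apply/implyP => He; rewrite H.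
Qed.

Lemma card_agr C S : #|[set S' | agr C S S']| = (2 ^ #|O C|)%N.
Proof.
have -> : [set S' | agr C S S'] = [set (S :\: O C) :|: y | y in powerset (O C)].
  apply/setP => S'; rewrite inE; apply/idP/imsetP.
  - move/agrP => H; exists (S' :&: O C); first by rewrite powersetE subsetIr.
    apply/setP => e; rewrite !inE; case: (boolP (tail e \in C)) => He /=.
      by rewrite andbT.
    by rewrite H // andbF orbF.
  - case=> y; rewrite powersetE => yO ->; apply/agrP => e He.
    have ey : e \notin y by apply/negP => ey; move: (fintype.subsetP yO e ey); rewrite inE (negbTE He).
    by rewrite !inE He (negbTE ey) orbF.
rewrite card_in_imset ?card_powerset // => y1 y2; rewrite ?inE ?powersetE => y1O y2O H.
apply/setP => e; case: (boolP (e \in O C)) => eO.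
  move/setP: H => /(_ e); rewrite !inE; move: eO; rewrite inE => -> /=.
  by [].
apply/idP/idP => ey; move: eO; [by rewrite (fintype.subsetP y1O e ey)| by rewrite (fintype.subsetP y2O e ey)].
Qed.

Lemma Av_cst C S (a : R) : Av C (fun _ => a) S = a.
Proof.
rewrite /Av (eq_bigl (fun S' => S' \in [set S' | agr C S S'])); last by move=> x; rewrite inE.
by rewrite sumr_const card_agr -[a *+ _]mulr_natl natrX mulrA -exprMn mulVf ?pnatr_eq0 // expr1n mul1r.
Qed.


Lemma eq_Av C S phi psi : (forall S', agr C S S' -> phi S' = psi S') -> Av C phi S = Av C psi S.
Proof. by move=> H; rewrite /Av; congr (_ * _); apply: eq_bigr. Qed.

Lemma half_pow_ge0 k : 0 <= (2^-1 : R) ^+ k.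
Proof. by rewrite exprn_ge0 // invr_ge0 ler0n. Qed.

Lemma Av_ge0 C S phi : (forall S', 0 <= phi S') -> 0 <= Av C phi S.
Proof. by move=> H; rewrite /Av mulr_ge0 ?half_pow_ge0 // sumr_ge0. Qed.

Lemma Av_le C S phi psi : (forall S', phi S' <= psi S') -> Av C phi S <= Av C psi S.
Proof. by move=> H; rewrite /Av ler_wpM2l ?half_pow_ge0 // ler_sum. Qed.

Lemma Av_add C S phi psi : Av C (fun X => phi X + psi X) S = Av C phi S + Av C psi S.
Proof. by rewrite /Av big_split mulrDr. Qed.

Lemma Av_scale C S (b : R) phi : Av C (fun X => b * phi X) S = b * Av C phi S.
Proof. by rewrite /Av -mulr_sumr mulrCA. Qed.

Lemma Av_lower C S phi X : (forall S', 0 <= phi S') -> agr C S X ->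
  (2^-1)^+#|O C| * phi X <= Av C phi S.
Proof.
move=> H HX; rewrite /Av ler_wpM2l ?half_pow_ge0 //.
by rewrite (bigD1 X) //= lerDl sumr_ge0.
Qed.

Fixpoint Phi (f : {set E} -> R) (m : nat) (S : {set E}) : R :=
  if m is m'.+1 then (if has_cl S then Av (cc S) (Phi f m') S else f S) else f S.

Lemma Phi_frozen f m S : ~~ has_cl S -> Phi f m S = f S.
Proof. by case: m => //= m /negbTE ->. Qed.

Lemma Phi_ge0 f m S : (forall X, 0 <= f X) -> 0 <= Phi f m S.
Proof.
move=> H; elim: m S => [|m IH] S //=; case: ifP => // _; exact: Av_ge0.
Qed.

Lemma Phi_le f g m S : (forall X, f X <= g X) -> Phi f m S <= Phi g m S.
Proof.
move=> H; elim: m S => [|m IH] S //=; case: ifP => // _; exact: Av_le.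
Qed.

Lemma Phi_aff f a b m S : Phi (fun X => a + b * f X) m S = a + b * Phi f m S.
Proof.
elim: m S => [|m IH] S //=; case: ifP => // _.
by rewrite (eq_Av (psi := fun X => a + b * Phi f m X)) // Av_add Av_cst Av_scale.
Qed.

Lemma Phi_comp f a b S : Phi f (a + b) S = Phi (Phi f a) b S.
Proof.
elim: b S => [|b IH] S /=; first by rewrite addn0.
rewrite addnS /=; case: (boolP (has_cl S)) => H.
  by apply: eq_Av => X _; rewrite IH.
by rewrite Phi_frozen.
Qed.

Lemma agr_local C D S X : agr C S X -> (forall v, v \in D -> v \notin C) ->
  forall e, tail e \in D -> (e \in S) = (e \in X).
Proof. by move=> /agrP H Hd e He; rewrite H // Hd. Qed.

Lemma min_agr C D S X : agr C S X -> (forall v, v \in D -> v \notin C) ->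
  min_cl S D -> min_cl X D.
Proof. by move=> HX Hd; rewrite (min_local (agr_local HX Hd)). Qed.

Definition agr2 C D S (Y : {set E}) :=
  [forall e, (tail e \notin C) && (tail e \notin D) ==> ((e \in Y) == (e \in S))].

Lemma diamond_key C D S phi : (forall v, v \in C -> v \notin D) ->
  \sum_(X | agr D S X) \sum_(Y | agr C X Y) phi Y = \sum_(Y | agr2 C D S Y) phi Y.
Proof.
move=> disj; rewrite (exchange_big_dep (agr2 C D S)) /=; last first.
  move=> X Y /agrP HX /agrP HY; apply/forallP => e; apply/implyP => /andP[h1 h2].
  by rewrite HY // HX.
apply: eq_bigr => Y /forallP HY.
pose w := [set e | if tail e \in D then e \in Y else e \in S].
rewrite (big_pred1 w) // => X /=; apply/andP/eqP.
- case=> /agrP HX /agrP HY'; apply/setP => e; rewrite inE; case: ifP => He.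
    have HC : tail e \notin C by apply/negP => /disj; rewrite He.
    by rewrite HY'.
  by rewrite HX // He.
- move=> ->; split; apply/agrP => e He; rewrite inE.
    by rewrite (negbTE He).
  case: ifP => // HD; apply/eqP; move: (HY e); rewrite He HD /=; done.
Qed.

Lemma diamond C D S phi : (forall v, v \in C -> v \notin D) ->
  Av D (fun X => Av C phi X) S = Av C (fun X => Av D phi X) S.
Proof.
move=> disj; rewrite /Av -!mulr_sumr !mulrA [X in X * _]mulrC.
rewrite !diamond_key //; last by move=> v vD; apply/negP => /disj; rewrite vD.
congr (_ * _); apply: eq_bigl => Y; apply: eq_forallb => e; by rewrite andbC.
Qed.

Lemma PhiA f : (forall X, has_cl X -> f X = 0) ->
  forall m S C, min_cl S C -> Phi f m.+1 S = Av C (Phi f m) S.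
Proof.
move=> Hf m; elim: m => [|m IH] S C HC; rewrite /= (min_has HC);
  have Hcc := cc_min (min_has HC);
  (case: (eqVneq (cc S) C) => [-> //|neq]);
  have disj := min_disj Hcc HC neq;
  have disj' : forall v, v \in C -> v \notin cc S
     by move=> v vC; apply/negP => /disj; rewrite vC.
- rewrite (eq_Av (psi := fun _ => 0)); last first.
    by move=> X HX; apply: Hf; apply: (min_has (min_agr HX disj' HC)).
  rewrite Av_cst (eq_Av (psi := fun _ => 0)) ?Av_cst //.
  by move=> X HX; apply: Hf; apply: (min_has (min_agr HX disj Hcc)).
- rewrite (eq_Av (psi := fun X => Av C (Phi f m) X)); last first.
    by move=> X HX; apply: IH; apply: (min_agr HX disj' HC).
  rewrite [RHS](eq_Av (psi := fun X => Av (cc S) (Phi f m) X)); last first.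
    by move=> X HX; apply: IH; apply: (min_agr HX disj Hcc).
  by rewrite diamond.
Qed.


Definition flip (e : E) S : {set E} := if e \in S then S :\ e else e |: S.

Lemma in_flip e S x : (x \in flip e S) = (if x == e then e \notin S else x \in S).
Proof.
rewrite /flip; case: (eqVneq x e) => [->|nx]; case: ifP => eS;
  rewrite ?inE ?eqxx ?eS ?(negbTE nx) //.
Qed.

Lemma flipK e : involutive (flip e).
Proof.
move=> S; apply/setP => x; rewrite !in_flip; case: (eqVneq x e) => [->|//].
by rewrite eqxx negbK.
Qed.

Lemma flip_inj e : injective (flip e).
Proof. exact: (can_inj (flipK e)). Qed.

Lemma flip_eq e S T : (flip e S == T) = (S == flip e T).
Proof. by apply/eqP/eqP => [<-|->]; rewrite flipK. Qed.

Lemma sum_flip e (P : pred {set E}) phi :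
  \sum_(X | P (flip e X)) phi X = \sum_(Y | P Y) phi (flip e Y).
Proof.
rewrite [RHS](reindex_inj (@flip_inj e)) /=; apply: eq_bigr => X _; by rewrite flipK.
Qed.

Lemma agr_flipR e C S X : tail e \in C -> agr C S (flip e X) = agr C S X.
Proof.
move=> He; apply: eq_forallb => x; rewrite in_flip; case: (eqVneq x e) => [->|//].
by rewrite He.
Qed.

Lemma agr_flipL e C S X : tail e \in C -> agr C (flip e S) X = agr C S X.
Proof.
move=> He; apply: eq_forallb => x; rewrite in_flip; case: (eqVneq x e) => [->|//].
by rewrite He.
Qed.

Lemma agr_flipLR e C S X : tail e \notin C -> agr C (flip e S) X = agr C S (flip e X).
Proof.
move=> He; apply: eq_forallb => x; rewrite !in_flip; case: (eqVneq x e) => [->|//].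
rewrite (negbTE He) /=; case: (e \in S); case: (e \in X) => //.
Qed.

Lemma Av_flipS e C S phi : tail e \in C -> Av C phi (flip e S) = Av C phi S.
Proof. by move=> He; rewrite /Av; congr (_ * _); apply: eq_bigl => X; rewrite agr_flipL. Qed.

Lemma Av_half e C S phi : tail e \in C ->
  Av C phi S = 2^-1 * Av C (fun X => phi X + phi (flip e X)) S.
Proof.
move=> He; rewrite Av_add.
have -> : Av C (fun X => phi (flip e X)) S = Av C phi S.
  rewrite /Av -sum_flip; congr (_ * _); apply: eq_bigl => X; by rewrite agr_flipR.
by rewrite -mulr2n -[Av C phi S *+ 2]mulr_natr mulrCA mulVf ?pnatr_eq0 // mulr1.
Qed.

Lemma Av_shift e C S phi : tail e \notin C ->
  Av C phi (flip e S) = Av C (fun X => phi (flip e X)) S.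
Proof.
move=> He; rewrite /Av -sum_flip; congr (_ * _); apply: eq_bigl => X.
by rewrite agr_flipLR.
Qed.

Lemma min_flip e C S : tail e \notin C -> min_cl (flip e S) C = min_cl S C.
Proof.
move=> He; apply: min_local => x Hx; rewrite in_flip; case: (eqVneq x e) => [xe|//].
by move: He; rewrite -xe Hx.
Qed.

Definition dlt T : {set E} -> R := fun X => (X == T)%:R.

Lemma dlt_cl T X : ~~ has_cl T -> has_cl X -> dlt T X = 0.
Proof.
move=> HT HX; rewrite /dlt; case: (eqVneq X T) => [XT|//].
by move: HT; rewrite -XT HX.
Qed.

Lemma Lam e T : ~~ has_cl T -> ~~ has_cl (flip e T) -> forall n S,
  Phi (dlt T) n S + Phi (dlt T) n (flip e S) =
  Phi (dlt (flip e T)) n S + Phi (dlt (flip e T)) n (flip e S).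
Proof.
move=> HT HT' n; set T' := flip e T.
have base : forall S, dlt T S + dlt T (flip e S) = dlt T' S + dlt T' (flip e S).
  move=> S; rewrite /dlt flip_eq /T' (inj_eq (@flip_inj e)) addrC //.
elim: n => [|n IH] S; first exact: base.
have Hf := dlt_cl HT; have Hf' := dlt_cl HT'.
case: (boolP [exists C, min_cl S C && (tail e \notin C)]).
  case/existsP=> C /andP[HC He].
  have HC' : min_cl (flip e S) C by rewrite min_flip.
  rewrite !(PhiA Hf _ HC) !(PhiA Hf _ HC') !(PhiA Hf' _ HC) !(PhiA Hf' _ HC').
  rewrite !Av_shift // -!Av_add; apply: eq_Av => X _; exact: IH.
move=> nA.
have key : forall X, has_cl X -> tail e \in cc X ->
    Phi (dlt T) n.+1 X = Phi (dlt T') n.+1 X.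
  move=> X HX He /=; rewrite HX (Av_half _ _ He) [RHS](Av_half _ _ He).
  by congr (_ * _); apply: eq_Av => Y _; exact: IH.
have k1 : has_cl S -> tail e \in cc S.
  move=> HS; apply: contraR nA => He; apply/existsP; exists (cc S).
  by rewrite cc_min // He.
have k2 : has_cl (flip e S) -> tail e \in cc (flip e S).
  move=> HS; apply: contraR nA => He; apply/existsP; exists (cc (flip e S)).
  by rewrite He -(min_flip S He) cc_min.
case: (boolP (has_cl S)) => H1; case: (boolP (has_cl (flip e S))) => H2.
- by rewrite key ?k1 // [Phi (dlt T) _ (flip e S)]key ?k2.
- rewrite key ?k1 // !(Phi_frozen _ _ H2); congr (_ + _).
  rewrite /dlt flip_eq /T' (inj_eq (@flip_inj e)).
  case: (eqVneq S T) => [ST|]; first by move: HT; rewrite -ST H1.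
  case: (eqVneq S (flip e T)) => [ST|//]; by move: HT'; rewrite -ST H1.
- rewrite [Phi (dlt T) _ (flip e S)]key ?k2 // !(Phi_frozen _ _ H1); congr (_ + _).
  rewrite /dlt /T'.
  case: (eqVneq S T) => [ST|]; first by move: HT'; rewrite -ST H2.
  case: (eqVneq S (flip e T)) => [ST|//]; by move: HT; rewrite -(flipK e T) -ST H2.
- by rewrite !Phi_frozen //; exact: base.
Qed.


Lemma sum_flip_all e phi : \sum_X phi (flip e X) = \sum_X phi X.
Proof. by rewrite -(sum_flip e predT). Qed.

Lemma sum_flip_eq e T n : ~~ has_cl T -> ~~ has_cl (flip e T) ->
  \sum_X Phi (dlt T) n X = \sum_X Phi (dlt (flip e T)) n X.
Proof.
move=> HT HT'.
have H2 : forall phi, \sum_X phi X = 2^-1 * \sum_X (phi X + phi (flip e X)).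
  move=> phi; rewrite big_split /= sum_flip_all -mulr2n.
  by rewrite -[(\sum_X phi X) *+ 2]mulr_natr mulrCA mulVf ?pnatr_eq0 // mulr1.
rewrite H2 [RHS]H2; congr (_ * _); apply: eq_bigr => X _; exact: Lam.
Qed.

Lemma sum_up k T U n : ~~ has_cl T -> T \subset U -> #|U :\: T| = k ->
  \sum_X Phi (dlt T) n X = \sum_X Phi (dlt U) n X.
Proof.
elim: k T => [|k IH] T HT TU Hk.
  have UT : U = T.
    apply/eqP; rewrite finset.eqEsubset; apply/andP; split => //.
    by rewrite -finset.setD_eq0 -cards_eq0 Hk.
  by rewrite UT.
have [e He] : exists e, e \in U :\: T.
  by apply/card_gt0P; rewrite Hk.
move: (He); rewrite inE => /andP[eT eU].
have fl : flip e T = e |: T by rewrite /flip (negbTE eT).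
have HT1 : ~~ has_cl (e |: T).
  by apply: contra HT; apply: has_cl_anti; apply: finset.subsetUr.
rewrite (@sum_flip_eq e) ?fl //; apply: IH => //.
  by rewrite finset.subUset finset.sub1set eU TU.
have eqs : U :\: (e |: T) = (U :\: T) :\ e.
  by apply/setP => x; rewrite !inE negb_or andbA.
by rewrite eqs; move: Hk; rewrite (cardsD1 e) He add1n => -[].
Qed.

Lemma sum_unif T U n : ~~ has_cl T -> ~~ has_cl U ->
  \sum_X Phi (dlt T) n X = \sum_X Phi (dlt U) n X.
Proof.
move=> HT HU.
rewrite (@sum_up _ T (T :|: U) n HT (finset.subsetUl _ _) erefl).
by rewrite [RHS](@sum_up _ U (T :|: U) n HU (finset.subsetUr _ _) erefl).
Qed.

Definition gg : {set E} -> R := fun X => (~~ has_cl X)%:R.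

Lemma gg_cl X : has_cl X -> gg X = 0.
Proof. by rewrite /gg => ->. Qed.

Definition d0 : R := (2^-1) ^+ #|E|.

Lemma d0_ge0 : 0 <= d0. Proof. exact: half_pow_ge0. Qed.
Lemma half_le1 : (2^-1 : R) <= 1.
Proof. by rewrite invf_le1 // ?ler1n // ltr0n. Qed.
Lemma d0_le1 : d0 <= 1. Proof. by rewrite exprn_ile1 // ?invr_ge0 ?ler0n // half_le1. Qed.

Lemma term_lb (Hfull : ~~ has_cl [set: E]) k S :
  (#|E| - #|S| <= k)%N -> d0 ^+ k <= Phi gg k S.
Proof.
elim: k S => [|k IH] S Hk.
  have -> : S = [set: E].
    apply/eqP; rewrite eqEcard finset.subsetT cardsT; move: Hk; rewrite leqn0 subn_eq0 //.
  by rewrite /= /gg Hfull expr0.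
rewrite /=; case: (boolP (has_cl S)) => HS; last first.
  by rewrite /gg HS exprn_ile1 // ?d0_ge0 ?d0_le1.
set C := cc S; have HC : min_cl S C := cc_min HS.
have [e [eC eS]] : exists e, tail e \in C /\ e \notin S.
  move: Hfull; apply: contraNP => Hn; apply/existsP; exists C.
  move: (min_cl_cl HC) => /and3P[Cn rC cC]; apply/and3P; split => //.
  apply/forall_inP => e _; apply/implyP => te; apply: contraT => hn.
  have eS : e \in S by apply: contraT => eS; case: Hn; by exists e.
  by move: (implyP (forall_inP cC e eS) te); rewrite (negbTE hn).
have agrU : agr C S (S :|: O C).
  apply/agrP => x Hx; by rewrite !inE (negbTE Hx) orbF.
have Hge : forall Y, 0 <= Phi gg k Y by move=> Y; apply: Phi_ge0 => Z; exact: ler0n.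
apply: (le_trans _ (Av_lower Hge agrU)).
rewrite exprS; apply: ler_pM; rewrite ?d0_ge0 ?exprn_ge0 ?d0_ge0 //.
  apply: ler_wiXn2l; rewrite ?invr_ge0 ?ler0n ?half_le1 //; exact: max_card.
apply: IH; rewrite leq_subLR; rewrite leq_subLR in Hk.
apply: leq_trans Hk _; rewrite addnS -addSn leq_add2r; apply: proper_card.
rewrite finset.properEneq finset.subsetUl andbT; apply/eqP => /setP /(_ e).
by rewrite !inE eC (negbTE eS).
Qed.


Definition KK := #|E|.+1.
Definition dd : R := d0 ^+ KK.

Lemma dd_ge0 : 0 <= dd. Proof. exact/exprn_ge0/d0_ge0. Qed.
Lemma dd_le1 : dd <= 1. Proof. exact/exprn_ile1/d0_le1/d0_ge0. Qed.

Lemma Phi_gg_lb (Hfull : ~~ has_cl [set: E]) S : dd <= Phi gg KK S.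
Proof. by apply: term_lb => //; rewrite /KK; apply: leqW; apply: leq_subr. Qed.

Lemma Phi_gg_ge0 k S : 0 <= Phi gg k S.
Proof. by apply: Phi_ge0 => Z; exact: ler0n. Qed.

Lemma decay (Hfull : ~~ has_cl [set: E]) j a S :
  1 - Phi gg (a + j * KK) S <= (1 - dd) ^+ j.
Proof.
elim: j S => [|j IH] S.
  rewrite expr0 mul0n addn0; have := Phi_gg_ge0 a S; lra.
rewrite mulSn [(KK + _)%N]addnC addnA Phi_comp.
have M0 : 0 <= (1 - dd) ^+ j by apply: exprn_ge0; have := dd_le1; lra.
have Hu : forall X, (1 - (1 - dd) ^+ j) + (1 - dd) ^+ j * gg X <= Phi gg (a + j * KK) X.
  move=> X; case: (boolP (has_cl X)) => HX.
    rewrite gg_cl // mulr0 addr0; have := IH X; lra.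
  by rewrite Phi_frozen // /gg HX mulr1 subrK.
have h1 := Phi_le KK S Hu; rewrite Phi_aff in h1.
have h3 : (1 - dd) ^+ j * dd <= (1 - dd) ^+ j * Phi gg KK S.
  by apply: ler_wpM2l => //; exact: Phi_gg_lb.
rewrite exprSr mulrBr mulr1; lra.
Qed.

Lemma bound (Hfull : ~~ has_cl [set: E]) n S :
  1 - Phi gg n S <= (1 - dd) ^+ (n %/ KK).
Proof. by rewrite {1}(divn_eq n KK) addnC decay. Qed.


Variable rule : seq {set E} -> {set V}.
Local Notation tr := (trans tail head r R rule).

Definition Wf f m (h : seq {set E}) : R :=
  \sum_(t : m.-tuple {set E}) f (last (last finset.set0 h) t) *
     \prod_(i < m) tr (h ++ take i t) (nth finset.set0 t i).

Lemma sum_tupleS (T0 : finType) m (F : m.+1.-tuple T0 -> R) :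
  \sum_t F t = \sum_x \sum_(t : m.-tuple T0) F (cons_tuple x t).
Proof.
rewrite pair_big /=.
rewrite (reindex (fun p : T0 * m.-tuple T0 => cons_tuple p.1 p.2)) //=.
apply: onW_bij; exists (fun t => (thead t, behead_tuple t)).
  by case=> x t /=; congr (_, _); apply: val_inj.
by move=> t; apply: val_inj; case: t => [[|x s] Hs].
Qed.

Lemma sum_tuple0 (T0 : finType) (F : 0.-tuple T0 -> R) : \sum_t F t = F [tuple].
Proof. by rewrite (big_pred1 [tuple]) // => t /=; apply/esym/eqP; exact: tuple0. Qed.

Lemma Wf_rec f m h : Wf f m.+1 h = \sum_x tr h x * Wf f m (rcons h x).
Proof.
rewrite /Wf sum_tupleS; apply: eq_bigr => x _; rewrite mulr_sumr.
apply: eq_bigr => t _; rewrite big_ord_recl /= cats0 last_rcons.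
rewrite mulrCA; congr (_ * (_ * _)); apply: eq_bigr => i _.
by rewrite cat_rcons.
Qed.

Lemma sum_tr h F : \sum_x tr h x * F x =
  if has_cl (last finset.set0 h) then Av (rule h) F (last finset.set0 h)
  else F (last finset.set0 h).
Proof.
rewrite /trans /=; case: ifP => H.
  rewrite /Av mulr_sumr [RHS]big_mkcond; apply: eq_bigr => x _.
  by rewrite /agr; case: ifP; rewrite ?mul0r.
rewrite (bigD1 (last finset.set0 h)) //= eqxx mul1r big1 ?addr0 //.
by move=> x /negbTE ->; rewrite mul0r.
Qed.

Lemma Wf1 m h : Wf (fun _ => 1) m h = 1.
Proof.
elim: m h => [|m IH] h.
  by rewrite /Wf sum_tuple0 big_ord0 mulr1.
rewrite Wf_rec (eq_bigr (fun x => tr h x * 1)); last by move=> x _; rewrite IH.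
by rewrite sum_tr; case: ifP => // _; rewrite Av_cst.
Qed.

Lemma W_Phi (valid : valid_rule tail head r rule) f :
  (forall X, has_cl X -> f X = 0) ->
  forall m h, h != [::] -> Wf f m h = Phi f m (last finset.set0 h).
Proof.
move=> Hf m; elim: m => [|m IH] h hne.
  by rewrite /Wf sum_tuple0 big_ord0 mulr1.
rewrite Wf_rec (eq_bigr (fun x => tr h x * Phi f m x)); last first.
  by move=> x _; rewrite IH ?last_rcons // -size_eq0 size_rcons.
rewrite sum_tr; case: ifP => H.
  by rewrite (PhiA Hf _ (valid h hne H)).
by rewrite Phi_frozen ?H //= H.
Qed.


Local Notation hw := (hist_weight tail head r R rule).
Local Notation sp := (state_prob tail head r R rule).

Lemma Avall F : Av [set: V] F finset.set0 = (2^-1)^+#|E| * \sum_X F X.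
Proof.
rewrite /Av; congr (_ ^+ _ * _).
  have -> : O [set: V] = [set: E] by apply/setP => e; rewrite !inE.
  by rewrite cardsT.
by apply: eq_bigl => X; apply/forallP => e; rewrite inE.
Qed.

Lemma SP f n : \sum_(t : n.+1.-tuple {set E}) hw t * f (last finset.set0 t) =
  Av [set: V] (fun S0 => Wf f n [:: S0]) finset.set0.
Proof.
rewrite Avall sum_tupleS mulr_sumr; apply: eq_bigr => S0 _.
rewrite /Wf mulr_sumr; apply: eq_bigr => t _; rewrite /hist_weight /=.
by rewrite -mulrA [_ * f _]mulrC.
Qed.

Lemma sum_states (P : pred {set E}) n :
  \sum_(S | P S) sp n S = \sum_(t : n.+1.-tuple {set E}) hw t * (P (last finset.set0 t))%:R.
Proof.
rewrite /state_prob (exchange_big_dep xpredT) //=; apply: eq_bigr => t _.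
case: (boolP (P (last finset.set0 t))) => HP.
  rewrite mulr1 (big_pred1 (last finset.set0 t)) // => S /=.
  by apply/andP/eqP => [[_ /eqP <-]|->].
rewrite mulr0 big_pred0 // => S; case: (eqVneq (last finset.set0 t) S) => [<-|]; 
  by rewrite ?(negbTE HP) ?andbF.
Qed.

Lemma Phi_gg_le1 n S : Phi gg n S <= 1.
Proof.
have := @Phi_le gg (fun X => 1 + 0 * gg X) n S; rewrite Phi_aff mul0r addr0; apply.
by move=> X; rewrite mul0r addr0 /gg; case: has_cl.
Qed.

Lemma Av_1B C S phi : Av C (fun X => 1 - phi X) S = 1 - Av C phi S.
Proof.
rewrite (eq_Av (psi := fun X => 1 + (-1) * phi X)); last by move=> X _; rewrite mulN1r.
by rewrite Av_add Av_cst Av_scale mulN1r.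
Qed.

Lemma dd_gt0 : 0 < dd.
Proof. by rewrite /dd /d0 !exprn_gt0 // invr_gt0 ltr0n. Qed.

Local Open Scope classical_set_scope.

Lemma conv_geo (u : nat -> R) l :
  (forall n, `|l - u n| <= (1 - dd) ^+ (n %/ KK)) -> u @ \oo --> l.
Proof.
move=> H; apply/cvgrPdist_lt => eps eps0.
have h1 : `|1 - dd| < 1.
  rewrite ger0_norm; last by have := dd_le1; lra.
  by have := dd_gt0; lra.
have := cvg_expr h1; move/cvgrPdist_lt => /(_ eps eps0) [N _ HN].
exists (N * KK)%N => // n /= Hn.
apply: (le_lt_trans (H n)); apply: (le_lt_trans _ (HN N (leqnn N))).
rewrite sub0r normrN ger0_norm; last by apply: exprn_ge0; have := dd_le1; lra.
apply: ler_wiXn2l; first by have := dd_le1; lra.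
  by have := dd_gt0; lra.
by rewrite leq_divRL.
Qed.

Lemma main_sec (valid : valid_rule tail head r rule) (Hfull : ~~ has_cl [set: E]) :
  ((fun n : nat => \sum_(S : {set E} | has_cl S) sp n S) @ \oo --> (0 : R)) /\
  (forall S : {set E}, ~~ has_cl S ->
     (fun n : nat => sp n S) @ \oo -->
       (#|[pred S' : {set E} | ~~ has_cl S']|%:R : R)^-1).
Proof.
have HRC : forall n, \sum_(S | ~~ has_cl S) sp n S = Av [set: V] (Phi gg n) finset.set0.
  move=> n; rewrite sum_states (SP gg n); apply: eq_Av => S0 _.
  by rewrite W_Phi //; exact: gg_cl.
have Htot : forall n, \sum_S sp n S = 1.
  move=> n; transitivity (Av [set: V] (fun S0 => Wf (fun _ => 1) n [:: S0]) finset.set0); last first.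
    by rewrite (eq_Av (psi := fun _ => 1)) ?Av_cst // => S0 _; rewrite Wf1.
  rewrite -SP; have := sum_states xpredT n; rewrite /= => ->; done.
have Hc : forall n, \sum_(S | has_cl S) sp n S = Av [set: V] (fun X => 1 - Phi gg n X) finset.set0.
  move=> n; rewrite Av_1B -HRC -(Htot n) [\sum_S _](bigID (fun S => has_cl S)) /=.
  by rewrite addrK.
have Hp : forall n T, ~~ has_cl T -> sp n T = Av [set: V] (Phi (dlt T) n) finset.set0.
  move=> n T HT; rewrite /state_prob big_mkcond /=.
  rewrite (eq_bigr (fun t => hw t * (dlt T) (last finset.set0 t))); last first.
    by move=> t _; rewrite /dlt; case: eqP; rewrite ?mulr1 ?mulr0.
  rewrite (SP (dlt T) n); apply: eq_Av => S0 _; rewrite W_Phi // => X; exact: dlt_cl.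
have cb : forall n, 0 <= \sum_(S | has_cl S) sp n S <= (1 - dd) ^+ (n %/ KK).
  move=> n; rewrite Hc; apply/andP; split.
    by apply: Av_ge0 => X; have := Phi_gg_le1 n X; lra.
  rewrite -[X in _ <= X](Av_cst [set: V] finset.set0); apply: Av_le => X.
  exact: bound.
split.
  apply: conv_geo => n; rewrite sub0r normrN ger0_norm; by case/andP: (cb n).
move=> T HT.
set N := #|[pred S' : {set E} | ~~ has_cl S']|.
have N0 : (0 < N)%N by apply/card_gt0P; exists [set: E]%SET; rewrite inE.
have Heq : forall n, sp n T = (1 - \sum_(S | has_cl S) sp n S) / N%:R.
  move=> n; rewrite Hc Av_1B -HRC.
  have -> : \sum_(S | ~~ has_cl S) sp n S = \sum_(S | ~~ has_cl S) sp n T.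
    apply: eq_bigr => S HS; rewrite !Hp // !Avall; congr (_ * _); exact: sum_unif.
  rewrite sumr_const opprB addrC subrK -[sp n T *+ _]mulr_natr mulfK //; by rewrite pnatr_eq0 -lt0n.
apply: conv_geo => n; rewrite Heq.
have [c0 c1] := andP (cb n); set c := \sum_(S | has_cl S) sp n S in c0 c1 *.
have Ninv : 0 < (N%:R : R)^-1 <= 1.
  by rewrite invr_gt0 ltr0n N0 /= invf_le1 ?ler1n ?ltr0n.
case/andP: Ninv => Ni0 Ni1.
rewrite mulrBl mul1r opprB addrC subrK ger0_norm; last by rewrite mulr_ge0 // ltW.
apply: le_trans c1; exact: ler_piMr.
Qed.

End Proof.

Local Open Scope classical_set_scope.
Local Open Scope ring_scope.

Theorem mainTheorem12 (V E : finType) (tail head : E -> V) (r : V)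
  (R : realType) (rule : seq {set E} -> {set V}) :
  (forall v : V, connect (arc_rel tail head [set: E]) v r) ->
  valid_rule tail head r rule ->
  ((fun n : nat =>
      \sum_(S : {set E} | has_cluster tail head r S)
         state_prob tail head r R rule n S) @ \oo --> (0 : R)) /\
  (forall S : {set E}, root_connected tail head r S ->
     (fun n : nat => state_prob tail head r R rule n S) @ \oo -->
       (#|(finset.finset (fun S' : {set E} => root_connected tail head r S'))|%:R : R)^-1).
Proof.
move=> Hconn valid.
have Hfull : ~~ has_cluster tail head r [set: E]%SET.
  by rewrite -root_connectedE; apply/forallP.
have [h1 h2] := @main_sec V E tail head r R rule valid Hfull.
split => // S HS.
have -> : #|finset.finset (fun S' : {set E} => root_connected tail head r S')| =
          #|[pred S' : {set E} | ~~ has_cluster tail head r S']|.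
  by apply: eq_card => X; rewrite !inE; exact: root_connectedE.
by apply: h2; move: HS; rewrite root_connectedE.
Qed.
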